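(* Let $p$ be an odd prime, let $\Delta\in\mathbb{Z}$ with $\Delta\equiv 3\pmod 4$ be a quadratic non-residue modulo $p$, and let $\mathfrak{p}=p\mathbb{Z}[\sqrt{\Delta}]$ (so $\mathbb{Z}[\sqrt{\Delta}]/\mathfrak{p}$ is a field with $p^2$ elements, in which each $k+\sqrt{\Delta}$, $k\in\mathbb{Z}$, is invertible). Let $$C_p=\prod_{1\le s<t\le p-1}\frac{1}{(t+\sqrt{\Delta})(s+\sqrt{\Delta})}\in \mathbb{Z}[\sqrt{\Delta}]/\mathfrak{p}.$$ Then $$C_p^{\frac{p-1}{2}}\equiv\left(\frac{-2}{p}\right)\pmod{\mathfrak{p}},$$ where $\left(\frac{\cdot}{p}\right)$ is the Legendre symbol. *)

(* Defs.v *)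
From HB Require Import structures.
From mathcomp Require Import all_boot all_order all_algebra.
From mathcomp Require Import ring.
Set Implicit Arguments. Unset Strict Implicit. Unset Printing Implicit Defensive.
Import Order.TTheory GRing.Theory Num.Theory.
Local Open Scope ring_scope.

(* The quotient ring Z[sqrt D] / p Z[sqrt D], realized as
   F_p[sqrt D] = pairs (a, b) in F_p x F_p standing for a + b sqrt D,
   with (a + b sqrt D)(c + d sqrt D) = (ac + D bd) + (ad + bc) sqrt D.
   Indeed Z[sqrt D]/pZ[sqrt D] = (Z/pZ)[X]/(X^2 - D). *)
Definition qsq (p : nat) (D : int) : Type := ('F_p * 'F_p)%type.

Section QSq.
Variables (p : nat) (D : int).

Local Notation qsq := (qsq p D).
HB.instance Definition _ := GRing.Zmodule.on qsq.

Local Notation d := (D%:~R : 'F_p).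

Definition qmul (x y : qsq) : qsq :=
  (x.1 * y.1 + d * x.2 * y.2, x.1 * y.2 + x.2 * y.1).
Definition qone : qsq := (1, 0).

Lemma qmulA : associative qmul.
Proof. by move=> [a b] [c e] [f g]; rewrite /qmul /=; congr pair; ring. Qed.
Lemma qmulC : commutative qmul.
Proof. by move=> [a b] [c e]; rewrite /qmul /=; congr pair; ring. Qed.
Lemma qmul1 : left_id qone qmul.
Proof. by move=> [a b]; rewrite /qmul /=; congr pair; ring. Qed.
Lemma qmulDl : left_distributive qmul +%R.
Proof.
move=> [a b] [c e] [f g]; rewrite /qmul /=.
change ((a, b) + (c, e)) with ((a + c, b + e) : qsq) => /=.
change ((?x, ?y) + (?z, ?w)) with ((x + z, y + w) : qsq).
by congr pair; ring.
Qed.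
Lemma qone_neq0 : qone != 0.
Proof. by apply/eqP => -[] /eqP; rewrite oner_eq0. Qed.

HB.instance Definition _ :=
  GRing.Zmodule_isComNzRing.Build qsq qmulA qmulC qmul1 qmulDl qone_neq0.

Definition qnorm (x : qsq) : 'F_p := x.1 ^+ 2 - d * x.2 ^+ 2.
Definition qunit : pred qsq := fun x => qnorm x \is a GRing.unit.
Definition qinv (x : qsq) : qsq :=
  if qunit x then (x.1 * (qnorm x)^-1, - x.2 * (qnorm x)^-1) else x.

Lemma qnormM (x y : qsq) : qnorm (qmul x y) = qnorm x * qnorm y.
Proof. by case: x y => [a b] [c e]; rewrite /qnorm /qmul /=; ring. Qed.

Lemma qmulVr : {in qunit, left_inverse qone qinv qmul}.
Proof.
move=> [a b] Hu; rewrite /qinv.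
have -> : qunit (a, b) by exact: Hu.
move: Hu; rewrite unfold_in /qunit /qnorm /qmul /= => Hu; congr pair.
  transitivity ((a ^+ 2 - d * b ^+ 2) * (a ^+ 2 - d * b ^+ 2)^-1); first by ring.
  by rewrite mulrV.
by ring.
Qed.

Lemma qunitPl (x y : qsq) : qmul y x = qone -> qunit x.
Proof.
move=> H; have := congr1 qnorm H; rewrite qnormM.
have -> : qnorm qone = 1 by rewrite /qnorm /=; ring.
move=> H1; apply/unitrP; exists (qnorm y); split => //; by rewrite mulrC.
Qed.

Lemma qinv_out : {in [predC qunit], qinv =1 id}.
Proof. by move=> x; rewrite inE /= => Hx; rewrite /qinv ifF //; exact: negbTE Hx. Qed.

HB.instance Definition _ :=
  GRing.ComNzRing_hasMulInverse.Build qsq qmulVr qunitPl qinv_out.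

Definition sqrtD : qsq := (0, 1).
End QSq.

Definition qnonresidue (D : int) (p : nat) : bool :=
  ~~ (p%:Z %| D)%Z && ~~ [exists x : 'F_p, x ^+ 2 == D%:~R].

Definition legendre (a : int) (p : nat) : int :=
  if (p%:Z %| a)%Z then 0
  else if [exists x : 'F_p, x ^+ 2 == a%:~R] then 1 else -1.

(* Main.v *)
Require Import Defs.
From HB Require Import structures.
From mathcomp Require Import all_boot all_order all_algebra.
From mathcomp Require Import finfield cyclic.
From mathcomp Require Import ring.
Import Order.TTheory GRing.Theory Num.Theory.
Local Open Scope ring_scope.

Lemma fermat p (x : 'F_p) : prime p -> x != 0 -> x ^+ (p - 1) = 1.
Proof.
move=> pr nz; apply: (mulIf nz); rewrite mul1r -exprSr subn1 prednK ?prime_gt0 //.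
by have := expf_card x; rewrite card_Fp.
Qed.

Arguments fermat {p x}.

Lemma euler_nonres p (a : 'F_p) : prime p -> odd p -> a != 0 ->
  ~~ [exists x : 'F_p, x ^+ 2 == a] -> a ^+ ((p - 1) %/ 2) = -1.
Proof.
move=> pr op nz nsq.
have p_gt1 := prime_gt1 pr.
set n := (p - 1)%N.
have n_gt0 : (0 < n)%N by rewrite /n subn_gt0.
pose rs := enum [pred x : 'F_p | x != 0].
have rs_roots : all n.-unity_root rs.
  by apply/allP => x; rewrite mem_enum inE => nx; rewrite unity_rootE fermat.
have szrs : (n <= size rs)%N.
  by rewrite -cardE cardC1 card_Fp // /n subn1.
have /hasP[g _ prim_g] := has_prim_root n_gt0 rs_roots (enum_uniq _) szrs.
have [i ai] := prim_rootP prim_g (fermat pr nz).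
set h := (n %/ 2)%N.
have nh : n = (h * 2)%N.
  rewrite /h divnK // /n; move: op; case: p {p_gt1 pr nz nsq a rs rs_roots szrs g prim_g i ai n n_gt0 h} => // p' /=.
  rewrite subn1 /=; move=> o; rewrite dvdn2; by case: (odd p') o.
have gh : g ^+ h = -1.
  have : (g ^+ h) ^+ 2 == 1 by rewrite -exprM -nh prim_expr_order.
  rewrite sqrf_eq1 => /orP[|/eqP //].
  rewrite -(expr0 g) (eq_prim_root_expr prim_g) mod0n modn_small; last first.
    by rewrite nh -{1}[h]muln1 ltn_pmul2l // lt0n; apply/negP => /eqP h0; move: n_gt0; rewrite nh h0.
  move/eqP => h0; move: n_gt0; by rewrite nh h0.
case oi : (odd i).
  by rewrite ai -exprM mulnC exprM gh -signr_odd oi expr1.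
case/negP: nsq; apply/existsP; exists (g ^+ (i./2)).
by rewrite ai -exprM -[X in _ == g ^+ X](odd_double_half i) oi add0n -muln2.
Qed.

Arguments euler_nonres {p a}.

Lemma euler_res p (a : 'F_p) : prime p -> odd p -> a != 0 ->
  [exists x : 'F_p, x ^+ 2 == a] -> a ^+ ((p - 1) %/ 2) = 1.
Proof.
move=> pr op nz /existsP[x /eqP ax].
have xnz : x != 0 by apply: contraNneq nz => x0; rewrite -ax x0 expr0n.
rewrite -ax -exprM mulnC divnK ?fermat //.
move: op; case: p pr {a nz x ax xnz} => // p' _ /=.
rewrite subn1 /=; move=> o; rewrite dvdn2; by case: (odd p') o.
Qed.

Definition emb p D (c : 'F_p) : qsq p D := (c, 0).

Lemma emb_zmod p D : zmod_morphism (emb p D).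
Proof. by move=> a b; rewrite /emb; congr pair; rewrite subrr. Qed.

Lemma emb_monoid p D : monoid_morphism (emb p D).
Proof. by split => // a b; rewrite /emb; congr pair => /=; ring. Qed.

HB.instance Definition _ p D := GRing.isZmodMorphism.Build 'F_p (qsq p D) (emb p D) (emb_zmod p D).
HB.instance Definition _ p D := GRing.isMonoidMorphism.Build 'F_p (qsq p D) (emb p D) (emb_monoid p D).

Lemma sqrtD2 p D : sqrtD p D ^+ 2 = emb p D (D%:~R).
Proof. by rewrite expr2 /emb; congr pair => /=; ring. Qed.

Lemma prodX p D : prime p ->
  \prod_(c : 'F_p) (sqrtD p D - emb p D c) = sqrtD p D ^+ p - sqrtD p D.
Proof.
move=> pr.
have := congr1 (fun P => (map_poly (emb p D) P).[sqrtD p D]) (finField_genPoly 'F_p).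
rewrite /= card_Fp // rmorph_prod horner_prod rmorphB /= map_polyXn map_polyX.
rewrite !hornerE => ->; apply: eq_bigr => c _.
by rewrite rmorphB /= map_polyX map_polyC hornerXsubC.
Qed.

Lemma prodFp p D (G : 'F_p -> qsq p D) : prime p ->
  \prod_(c : 'F_p) G c = \prod_(0 <= k < p) G k%:R.
Proof.
move=> pr.
have H (n m : nat) (F : nat -> qsq p D) : n = m ->
  \prod_(0 <= k < n) F k = \prod_(0 <= k < m) F k by move=> ->.
rewrite -(H _ _ _ (Fp_cast pr)) big_mkord; apply: eq_bigr => c _.
by rewrite natr_Zp.
Qed.

Lemma prodP p D : prime p ->
  sqrtD p D * \prod_(1 <= k < p) (k%:R + sqrtD p D) = sqrtD p D ^+ p - sqrtD p D.
Proof.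
move=> pr; rewrite -prodX // (reindex_inj oppr_inj) /= prodFp //.
rewrite [RHS]big_ltn ?prime_gt0 //= raddf0 subr0; congr (_ * _).
apply: eq_bigr => k _.
rewrite (raddfN (emb p D)) opprK (raddfMn (emb p D)) /=.
by rewrite addrC.
Qed.

Arguments euler_res {p a}.

Lemma intr_Fp_neq0 p (z : int) : prime p -> ~~ (p%:Z %| z)%Z -> (z%:~R : 'F_p) != 0.
Proof.
move=> pr; case: z => n; rewrite dvdzE /=.
  by rewrite -pmulrn -(dvdn_pcharf (pchar_Fp pr)).
by rewrite NegzE mulrNz oppr_eq0 -pmulrn -(dvdn_pcharf (pchar_Fp pr)).
Qed.

Arguments intr_Fp_neq0 {p z}.

Lemma oddp_h p : odd p -> p = ((p - 1) %/ 2 * 2).+1.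
Proof.
case: p => // p' /= o; rewrite subn1 /= divnK //.
by rewrite dvdn2; case: (odd p') o.
Qed.

Arguments oddp_h {p}.

Lemma sqrtD_p p D : prime p -> odd p -> qnonresidue D p ->
  sqrtD p D ^+ p = - sqrtD p D.
Proof.
move=> pr op /andP[nd ns].
have -> : sqrtD p D ^+ p = sqrtD p D ^+ ((p - 1) %/ 2 * 2).+1.
  by congr (_ ^+ _); exact: oddp_h.
rewrite exprSr mulnC exprM sqrtD2 -rmorphXn /=.
rewrite (euler_nonres pr op (intr_Fp_neq0 pr nd) ns).
by rewrite rmorphN rmorph1 mulN1r.
Qed.

Lemma sqrtD_unit p D : prime p -> qnonresidue D p -> sqrtD p D \is a GRing.unit.
Proof.
move=> pr /andP[nd _]; have dn := intr_Fp_neq0 pr nd.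
apply/unitrP; exists ((0, (D%:~R)^-1) : qsq p D); split.
  change (qmul ((0, (D%:~R)^-1) : qsq p D) (sqrtD p D) = qone p D).
  by rewrite /qmul /qone /=; congr pair; rewrite ?mul0r ?add0r ?mulr1 ?mulr0 ?divff.
change (qmul (sqrtD p D) ((0, (D%:~R)^-1) : qsq p D) = qone p D).
by rewrite /qmul /qone /=; congr pair; rewrite ?mul0r ?add0r ?mulr1 ?mulr0 ?addr0 ?divff.
Qed.

Arguments sqrtD_unit {p D}.
Arguments sqrtD_p {p D}.
Arguments prodP {p D}.

Lemma ndv2 p : (2 < p)%N -> ~~ (p%:Z %| -2)%Z.
Proof.
move=> p3; rewrite dvdzE /=.
by apply/negP => /(dvdn_leq (ltn0Sn _)); rewrite leqNgt p3.
Qed.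

Lemma prodP2 p D : prime p -> odd p -> qnonresidue D p ->
  \prod_(1 <= k < p) (k%:R + sqrtD p D) = - 2%:R.
Proof.
move=> pr op nr; apply: (mulrI (sqrtD_unit pr nr)).
by rewrite prodP // sqrtD_p // mulrN mulrC mulr2n mulrDl !mul1r opprD.
Qed.
Arguments prodP2 {p D}.

Lemma dbl (R : comNzRingType) (y : nat -> R) n :
  \prod_(1 <= t < n) \prod_(1 <= s < t) (y t * y s) =
  (\prod_(1 <= k < n) y k) ^+ (n - 2).
Proof.
elim: n => [|n IH]; first by rewrite !big_geq.
case: n IH => [|[|n]] IH; first by rewrite !big_geq.
  by rewrite big_nat1 big_geq.
rewrite big_nat_recr //= IH big_split /= prodr_const_nat.
rewrite [in RHS]big_nat_recr //=.
have -> : (n.+2 - 2 = n)%N by rewrite subnS subn1.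
have -> : (n.+2 - 1 = n.+1)%N by rewrite subn1.
have -> : (n.+3 - 2 = n.+1)%N by rewrite subnS subn1.
rewrite exprMn exprS.
rewrite exprSr; set a := \prod_(1 <= i < n.+2) y i; set c := y n.+2 ^+ n; set e := a ^+ n; ring.
Qed.

Lemma legendre_m2 p D : prime p -> odd p -> (2 < p)%N ->
  (- 2%:R : qsq p D) ^+ ((p - 1) %/ 2) = (legendre (-2) p)%:~R.
Proof.
move=> pr op p3.
have ndv : ~~ (p%:Z %| -2)%Z.
  rewrite dvdzE /=.
  by apply/negP => /(dvdn_leq (ltn0Sn _)); rewrite leqNgt p3.
have nz : ((-2)%:~R : 'F_p) != 0 by apply: intr_Fp_neq0.
have E : (- 2%:R : qsq p D) = emb p D ((-2)%:~R) by rewrite rmorph_int.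
rewrite E -rmorphXn /legendre (negbTE ndv).
case: ifP => H.
  by rewrite (euler_res pr op nz H) rmorph1.
by rewrite (euler_nonres pr op nz (negbT H)) rmorphN rmorph1.
Qed.

Theorem lemma2p3 (p : nat) (D : int) :
  prime p -> odd p -> (D %% 4)%Z = 3 -> qnonresidue D p ->
  (\prod_(1 <= t < p) \prod_(1 <= s < t)
      ((t%:R + sqrtD p D) * (s%:R + sqrtD p D))^-1 : qsq p D)
    ^+ ((p - 1) %/ 2) = (legendre (-2) p)%:~R.
Proof.
move=> pr op _ nr.
have p3 : (2 < p)%N.
  by case: p pr op {nr} => [|[|[|p']]].
set x := fun k : nat => (k%:R + sqrtD p D : qsq p D).
have P2 : \prod_(1 <= k < p) x k = - 2%:R := prodP2 pr op nr.
have U2 : (- 2%:R : qsq p D) \is a GRing.unit.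
  have -> : (- 2%:R : qsq p D) = emb p D (- 2%:R) by rewrite rmorphN rmorph_nat.
  apply: rmorph_unit; rewrite unitfE oppr_eq0 -(dvdn_pcharf (pchar_Fp pr)).
  by apply/negP => /(dvdn_leq (ltn0Sn _)); rewrite leqNgt p3.
have Ux : forall k, (1 <= k < p)%N -> x k \is a GRing.unit.
  move=> k kr; move: U2; rewrite -P2 => /unitr_prodP; apply => //.
  by rewrite mem_index_iota.
have -> : \prod_(1 <= t < p) \prod_(1 <= s < t) ((t%:R + sqrtD p D) * (s%:R + sqrtD p D))^-1
   = \prod_(1 <= t < p) \prod_(1 <= s < t) ((x t)^-1 * (x s)^-1).
  apply: eq_big_nat => t /andP[t1 tp]; apply: eq_big_nat => s /andP[s1 st].
  have ut : x t \is a GRing.unit by apply: Ux; rewrite t1.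
  have us : x s \is a GRing.unit by apply: Ux; rewrite s1 (ltn_trans st tp).
  by rewrite invrM // mulrC.
rewrite dbl.
set Y := \prod_(1 <= k < p) (x k)^-1.
have YP : Y * (- 2%:R) = 1.
  rewrite /Y -P2 -big_split /=; rewrite big_nat big1 // => k kr; exact: mulVr (Ux k kr).
rewrite -legendre_m2 // exprAC.
set L := (- 2%:R : qsq p D) ^+ ((p - 1) %/ 2).
have YL : Y ^+ ((p - 1) %/ 2) * L = 1 by rewrite /L -exprMn YP expr1n.
have [L1|L1] : L = 1 \/ L = -1.
  rewrite /L legendre_m2 // /legendre (negbTE (ndv2 _ p3)).
  by case: ifP => _; [left|right].
rewrite L1 in YL *.
  by move: YL; rewrite mulr1 => ->; rewrite expr1n.
rewrite L1 in YL *.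
have -> : Y ^+ ((p - 1) %/ 2) = -1.
  by apply/eqP; rewrite -eqr_oppLR -mulrN1 YL.
by rewrite -signr_odd oddB ?(ltnW p3) // op expr1.
Qed.
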